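(* Let $\omega:\Gamma^2\to\Gamma$ be a group morphism and $h\in\Gamma$, and suppose there is a map $b:\{0,1\}^*\to\Gamma$ with $b(u)=h\cdot\omega(b(u0),b(u1))$ for all $u\in\{0,1\}^*$. Then $G(\omega)\cong G(\mathrm{ad}(h)\circ\omega)$.
   Context: $\mathrm{ad}(h)(g)=hgh^{-1}$. $\{0,1\}^*$ denotes the finite words over $\{0,1\}$; $\mathfrak C=\{0,1\}^{\mathbb N}$. A finite complete prefix code is a finite set $\{t_1,\dots,t_n\}\subset\{0,1\}^*$ such that every $x\in\mathfrak C$ has exactly one $t_i$ as prefix. Thompson's group $V$ is the group of homeomorphisms $v$ of $\mathfrak C$ for which there exist finite complete prefix codes $\{t_i\},\{s_i\}$ and a permutation $\sigma$ with $v(t_iw)=s_{\sigma(i)}w$. For a group morphism $\omega:\Gamma^2\to\Gamma$, $K(\omega)$ is the group of maps $a:\{0,1\}^*\to\Gamma$ (pointwise product) with $a(u)=\omega(a(u0),a(u1))$ for all $u$; $V$ acts on it by $\pi(v)(a)(s_{\sigma(i)}u)=a(t_iu)$ for all $i$, $u$ (determining $\pi(v)(a)\in K(\omega)$ uniquely); $G(\omega):=K(\omega)\rtimes V$ with $vav^{-1}=\pi(v)(a)$. *)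

(* Defs.v *)
From Stdlib Require Import ClassicalEpsilon.
From mathcomp Require Import all_boot fingroup perm.
Set Implicit Arguments. Unset Strict Implicit. Unset Printing Implicit Defensive.

Record group := Group {
  gcar :> Type;
  gmul : gcar -> gcar -> gcar;
  gone : gcar;
  ginv : gcar -> gcar;
  gmulA : forall x y z, gmul x (gmul y z) = gmul (gmul x y) z;
  gmul1 : forall x, gmul gone x = x;
  gmulV : forall x, gmul (ginv x) x = gone
}.

Definition is_morph2 (Gam : group) (om : Gam -> Gam -> Gam) : Prop :=
  forall x1 x2 y1 y2,
    om (gmul x1 y1) (gmul x2 y2) = gmul (om x1 x2) (om y1 y2).

Definition ad (Gam : group) (h : Gam) (g : Gam) : Gam := gmul (gmul h g) (ginv h).

(** Finite words {0,1}^* are [seq bool] (false = 0, true = 1);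
    the Cantor space C = {0,1}^N is [nat -> bool]. *)
Definition word := seq bool.
Definition cantor := nat -> bool.

Definition wcat (t : word) (w : cantor) : cantor :=
  fun k => if k < size t then nth false t k else w (k - size t).

Definition is_prefix (t : word) (x : cantor) : Prop :=
  forall k, k < size t -> x k = nth false t k.

Definition complete_prefix_code (n : nat) (t : 'I_n -> word) : Prop :=
  forall x : cantor, exists! i, is_prefix (t i) x.

Definition V_codes (v : cantor -> cantor) (n : nat) (t s : 'I_n -> word)
    (sigma : {perm 'I_n}) : Prop :=
  [/\ complete_prefix_code t, complete_prefix_code s &
      forall i w, v (wcat (t i) w) = wcat (s (sigma i)) w].

(** Thompson's group V (as a set of self-maps of C; group law = composition). *)
Definition inV (v : cantor -> cantor) : Prop :=
  exists n t s sigma, @V_codes v n t s sigma.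

Definition inK (Gam : group) (om : Gam -> Gam -> Gam) (a : word -> Gam) : Prop :=
  forall u, a u = om (a (rcons u false)) (a (rcons u true)).

Definition kmul (Gam : group) (a b : word -> Gam) : word -> Gam :=
  fun u => gmul (a u) (b u).

Definition pi_spec (Gam : group) (om : Gam -> Gam -> Gam)
    (v : cantor -> cantor) (a b : word -> Gam) : Prop :=
  inK om b /\
  exists n t s sigma, @V_codes v n t s sigma /\
    forall i u, b (s (sigma i) ++ u) = a (t i ++ u).

(** pi(v)(a): the unique b with pi_spec (it exists and is unique for v in V
    and a in K(omega), as stated in the paper). *)
Definition pi (Gam : group) (om : Gam -> Gam -> Gam)
    (v : cantor -> cantor) (a : word -> Gam) : word -> Gam :=
  epsilon (inhabits a) (pi_spec om v a).

(** G(omega) = K(omega) ⋊ V : elements are pairs (a, v), a in K(omega), v in V,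
    with (a,v)(a',v') = (a * pi(v)(a'), v v')  (since v a' v^{-1} = pi(v)(a')). *)
Definition Gelt (Gam : group) := ((word -> Gam) * (cantor -> cantor))%type.

Definition inG (Gam : group) (om : Gam -> Gam -> Gam) (x : Gelt Gam) : Prop :=
  inK om x.1 /\ inV x.2.

Definition Gmul (Gam : group) (om : Gam -> Gam -> Gam) (x y : Gelt Gam) : Gelt Gam :=
  (kmul x.1 (pi om x.2 y.1), x.2 \o y.2).

Definition G_isomorphic (Gam : group) (om1 om2 : Gam -> Gam -> Gam) : Prop :=
  exists f : Gelt Gam -> Gelt Gam,
    [/\ (forall x, inG om1 x -> inG om2 (f x)),
        (forall x y, inG om1 x -> inG om1 y -> f x = f y -> x = y),
        (forall y, inG om2 y -> exists2 x, inG om1 x & f x = y) &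
        (forall x y, inG om1 x -> inG om1 y -> f (Gmul om1 x y) = Gmul om2 (f x) (f y))].

(* Main.v *)
Require Import Defs.
From Stdlib Require Import ClassicalEpsilon FunctionalExtensionality.
From mathcomp Require Import all_boot fingroup perm.
From mathcomp Require Import zify.
Set Implicit Arguments. Unset Strict Implicit. Unset Printing Implicit Defensive.

Lemma gmulgV (G : Defs.group) (x : G) : gmul x (ginv x) = @gone G.
Proof.
have e : gmul x (ginv x) = gmul (gmul (ginv (ginv x)) (ginv x)) (gmul x (ginv x)).
  by rewrite gmulV gmul1.
rewrite e -gmulA [gmul (ginv x) (gmul x _)]gmulA gmulV gmul1 gmulV //.
Qed.

Lemma gmulg1 (G : Defs.group) (x : G) : gmul x (@gone G) = x.
Proof. by rewrite -(gmulV x) gmulA gmulgV gmul1. Qed.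

Lemma gmulVK (G : Defs.group) (x y : G) : gmul (gmul x (ginv y)) y = x.
Proof. by rewrite -gmulA gmulV gmulg1. Qed.

Lemma ginv_uniq (G : Defs.group) (x z : G) : gmul z x = @gone G -> z = ginv x.
Proof. by move=> e; rewrite -(gmulg1 z) -(gmulgV x) gmulA e gmul1. Qed.

Lemma ginvM (G : Defs.group) (x y : G) : ginv (gmul x y) = gmul (ginv y) (ginv x).
Proof. symmetry; apply: ginv_uniq; by rewrite -gmulA [gmul (ginv x) _]gmulA gmulV gmul1 gmulV. Qed.

Lemma gmul_cancel (G : Defs.group) (x y z : G) : gmul x y = gmul x z -> y = z.
Proof. by move=> e; rewrite -(gmul1 y) -(gmulV x) -gmulA e gmulA gmulV gmul1. Qed.

Lemma gmul_cancelr (G : Defs.group) (x y z : G) : gmul y x = gmul z x -> y = z.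
Proof. by move=> e; rewrite -(gmulg1 y) -(gmulgV x) gmulA e -gmulA gmulgV gmulg1. Qed.

Lemma om11 (G : Defs.group) (om : G -> G -> G) : is_morph2 om -> om (@gone G) (@gone G) = @gone G.
Proof.
move=> hm; apply: (@gmul_cancel _ (om (@gone G) (@gone G))).
by rewrite -hm !gmul1 gmulg1.
Qed.

Lemma omV (G : Defs.group) (om : G -> G -> G) x y : is_morph2 om ->
  om (ginv x) (ginv y) = ginv (om x y).
Proof. by move=> hm; apply: ginv_uniq; rewrite -hm !gmulV om11. Qed.

Lemma wcat_cat (t u : word) (x : cantor) : wcat (t ++ u) x = wcat t (wcat u x).
Proof.
apply: functional_extensionality => k; rewrite /wcat size_cat nth_cat.
case: (ltnP k (size t)) => h1.
  by have -> : k < size t + size u by lia.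
case: (ltnP (k - size t) (size u)) => h2.
  by have -> : k < size t + size u by lia.
have -> : (k < size t + size u) = false by lia.
by rewrite subnDA.
Qed.

Lemma wcat_shift (t : word) x k : wcat t x (k + size t) = x k.
Proof. rewrite /wcat; have -> : (k + size t < size t) = false by lia. by rewrite addnK. Qed.

Lemma wcat_inj (w1 w2 : word) : (forall x, wcat w1 x = wcat w2 x) -> w1 = w2.
Proof.
move=> e.
have hs : size w1 = size w2.
  case: (ltngtP (size w1) (size w2)) => // h.
  - have := congr1 (fun f => f (size w1)) (e (fun _ => ~~ nth false w2 (size w1))).
    rewrite /wcat /= ltnn h; by case: (nth false w2 (size w1)).
  - have := congr1 (fun f => f (size w2)) (e (fun _ => ~~ nth false w1 (size w2))).
    rewrite /wcat /= ltnn h; by case: (nth false w1 (size w2)).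
apply: (eq_from_nth (x0 := false) hs) => k hk.
have := congr1 (fun f => f k) (e (fun _ => false)).
rewrite /wcat /= hk; by rewrite -hs hk.
Qed.

Lemma is_prefix_wcat t x : is_prefix t (wcat t x).
Proof. by move=> k hk; rewrite /wcat hk. Qed.

Lemma prefix_decomp t x : is_prefix t x -> x = wcat t (fun k => x (k + size t)).
Proof.
move=> h; apply: functional_extensionality => k; rewrite /wcat.
case: ifP => hk; first by rewrite h.
by rewrite subnK // leqNgt hk.
Qed.

Lemma code_decomp n (s : 'I_n -> word) : complete_prefix_code s ->
  forall w, \max_(j < n) size (s j) <= size w -> exists j u, w = s j ++ u.
Proof.
move=> hc w hw.
have [j [hj _]] := hc (wcat w (fun _ => false)).
exists j, (drop (size (s j)) w).
have hle : size (s j) <= size w by apply: leq_trans (leq_bigmax j) hw.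
suff e : take (size (s j)) w = s j by rewrite -{1}(cat_take_drop (size (s j)) w) e.
apply: (eq_from_nth (x0 := false)); first by rewrite size_take_min; lia.
move=> k; rewrite size_take_min => hk.
have hk1 : k < size (s j) by lia.
rewrite nth_take // -hj //; rewrite /wcat; have -> : k < size w by lia. done.
Qed.

Definition preim (v : cantor -> cantor) (w' w : word) := forall x, v (wcat w' x) = wcat w x.

Definition Good (v : cantor -> cantor) := exists N, forall w, N <= size w ->
  exists w', size w <= size w' + N /\ preim v w' w.

Definition Pv (G : Defs.group) (v : cantor -> cantor) (c c' : word -> G) :=
  forall w w', preim v w' w -> c' w = c w'.

Definition Tr (G : Defs.group) (R : G -> G -> G) (v : cantor -> cantor) (c : word -> G) :=
  epsilon (inhabits c) (fun c' => inK R c' /\ Pv v c c').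

Lemma preim_rcons v w' w b : preim v w' w -> preim v (rcons w' b) (rcons w b).
Proof. by move=> h x; rewrite -!cats1 !wcat_cat h. Qed.

Fixpoint Fk (G : Defs.group) (R : G -> G -> G) (c : word -> G) (pre : word -> word)
  (k : nat) (w : word) : G :=
  match k with
  | 0 => c (pre w)
  | k'.+1 => R (Fk R c pre k' (rcons w false)) (Fk R c pre k' (rcons w true))
  end.

Lemma Tr_spec (G : Defs.group) (R : G -> G -> G) v (c : word -> G) :
  Good v -> injective v -> inK R c -> inK R (Tr R v c) /\ Pv v c (Tr R v c).
Proof.
move=> [N hN] hinj hc; apply: (epsilon_spec (inhabits c) (fun c0 => inK R c0 /\ Pv v c c0)).
pose pre w := epsilon (inhabits w) (fun w' => preim v w' w).
have hpre : forall w, N <= size w -> preim v (pre w) w.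
  move=> w hw; apply: (epsilon_spec (inhabits w) (fun w0 => preim v w0 w)); have [w' [_ ?]] := hN w hw; by exists w'.
have claim : forall k w w', N <= size w + k -> preim v w' w -> Fk R c pre k w = c w'.
  elim=> [|k IH] w w' hk hp /=.
    rewrite addn0 in hk; congr c; apply: wcat_inj => x; apply: hinj.
    by rewrite hpre // hp.
  rewrite (IH _ (rcons w' false)) ?(IH _ (rcons w' true)) -?hc //;
    try (by apply: preim_rcons); rewrite size_rcons; lia.
exists (fun w => Fk R c pre (N - size w) w); split.
  move=> u /=; rewrite !size_rcons.
  case: (ltnP (size u) N) => hu.
    by have -> : N - size u = (N - (size u).+1).+1 by lia.
  have -> : N - size u = 0 by lia.
  have -> : N - (size u).+1 = 0 by lia.
  rewrite /= -[c (pre (rcons u false))]/(Fk R c pre 0 (rcons u false)) -[c (pre (rcons u true))]/(Fk R c pre 0 (rcons u true)).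
  rewrite (claim 0 _ (rcons (pre u) false)) ?(claim 0 _ (rcons (pre u) true)) -?hc //;
    try (by apply: preim_rcons; apply: hpre); rewrite size_rcons; lia.
move=> w w' hp; apply: claim => //; lia.
Qed.

Lemma K_agree (G : Defs.group) (R : G -> G -> G) (c1 c2 : word -> G) N :
  inK R c1 -> inK R c2 -> (forall w, N <= size w -> c1 w = c2 w) -> c1 = c2.
Proof.
move=> h1 h2 h; apply: functional_extensionality => w.
suff : forall k w, N <= size w + k -> c1 w = c2 w by move=> /(_ N w); apply; lia.
elim=> [|k IH] {}w hk; first by apply: h; lia.
rewrite h1 h2 !IH // size_rcons; lia.
Qed.

Lemma Tr_unique (G : Defs.group) (R : G -> G -> G) v (c c' : word -> G) :
  Good v -> injective v -> inK R c -> inK R c' -> Pv v c c' -> c' = Tr R v c.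
Proof.
move=> hg hi hc hc' hp; have [h1 h2] := Tr_spec hg hi hc.
have [N hN] := hg.
apply: (K_agree (N := N) hc' h1) => w hw.
have [w' [_ hw']] := hN w hw.
by rewrite (hp _ _ hw') (h2 _ _ hw').
Qed.

Lemma codes_preim v n (t s : 'I_n -> word) sigma i u :
  V_codes v t s sigma -> preim v (t i ++ u) (s (sigma i) ++ u).
Proof. by case=> _ _ h x; rewrite !wcat_cat h. Qed.

Lemma inV_good v : inV v -> Good v.
Proof.
move=> [n [t [s [sigma hv]]]].
exists (\max_(j < n) size (s j)) => w hw.
have [_ hs _] := hv.
have [j [u ->]] := code_decomp hs hw.
exists (t (sigma^-1 j)%g ++ u); split.
  rewrite !size_cat; have hj := @leq_bigmax _ (fun j => size (s j)) j.
  apply: leq_trans (leq_add hj (leqnn (size u))) _.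
  rewrite [X in _ <= X]addnC; apply: leq_add => //; exact: leq_addl.
by have := codes_preim (sigma^-1 j)%g u hv; rewrite permKV.
Qed.

Lemma inV_inj v : inV v -> injective v.
Proof.
move=> [n [t [s [sigma [ht hs hv]]]]] x y e.
have [i [hi _]] := ht x.
have [k [hk _]] := ht y.
rewrite (prefix_decomp hi) (prefix_decomp hk) in e *.
rewrite !hv in e.
have [j [_ hu]] := hs (wcat (s (sigma i)) (fun k0 => x (k0 + size (t i)))).
have e1 := hu _ (@is_prefix_wcat (s (sigma i)) _).
have e2 := hu (sigma k) ltac:(rewrite e; apply: (@is_prefix_wcat (s (sigma k)))).
have eik : i = k by apply: (perm_inj (s := sigma)); rewrite -e1 -e2.
subst k; congr wcat; apply: functional_extensionality => m.
have := congr1 (fun f => f (m + size (s (sigma i)))) e.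
by rewrite /= !wcat_shift.
Qed.

Lemma good_comp v v' : Good v -> Good v' -> Good (v \o v').
Proof.
move=> [N hN] [N' hN']; exists (N + N') => w hw.
have [w' [h1 p1]] := hN w ltac:(lia).
have [w'' [h2 p2]] := hN' w' ltac:(lia).
exists w''; split; first lia.
by move=> x /=; rewrite p2 p1.
Qed.

Lemma pi_Tr (G : Defs.group) (R : G -> G -> G) v (a : word -> G) :
  inV v -> inK R a -> Defs.pi R v a = Tr R v a.
Proof.
move=> hV ha.
have [h1 h2] := Tr_spec (inV_good hV) (inV_inj hV) ha.
have : Defs.pi_spec R v a (Defs.pi R v a).
  rewrite /Defs.pi; apply: epsilon_spec; exists (Tr R v a); split => //.
  have [n [t [s [sigma hv]]]] := hV.
  exists n, t, s, sigma; split => // i u.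
  by apply: h2; apply: codes_preim.
move=> [hp [n [t [s [sigma [hv hpt]]]]]].
apply: (K_agree (N := \max_(j < n) size (s j)) hp h1) => w hw.
have [_ hs _] := hv.
have [j [u ->]] := code_decomp hs hw.
have := hpt (sigma^-1 j)%g u; rewrite permKV => ->.
symmetry; apply: h2.
by have := codes_preim (sigma^-1 j)%g u hv; rewrite permKV.
Qed.

Lemma kcomb (G : Defs.group) (om : G -> G -> G) (h : G) (p q a : word -> G) :
  is_morph2 om ->
  inK (fun x y => gmul h (om x y)) p -> inK (fun x y => gmul h (om x y)) q -> inK om a ->
  inK (fun x y => ad h (om x y)) (fun u => gmul (gmul (p u) (a u)) (ginv (q u))).
Proof.
move=> hm hp hq ha u /=.
rewrite {1}hp {1}hq {1}ha /ad !hm omV // !ginvM !gmulA //.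
Qed.

Lemma ksurj (G : Defs.group) (om : G -> G -> G) (h : G) (p q c : word -> G) :
  is_morph2 om ->
  inK (fun x y => gmul h (om x y)) p -> inK (fun x y => gmul h (om x y)) q ->
  inK (fun x y => ad h (om x y)) c ->
  inK om (fun u => gmul (gmul (ginv (p u)) (c u)) (q u)).
Proof.
move=> hm hp hq hc u /=.
rewrite {1}hp {1}hq {1}hc /ad !hm omV // !ginvM !gmulA !gmulVK //.
Qed.

Theorem mainTheorem14 (Gam : Defs.group) (om : Gam -> Gam -> Gam) (h : Gam) :
  is_morph2 om ->
  (exists b : word -> Gam, forall u : word,
      b u = gmul h (om (b (rcons u false)) (b (rcons u true)))) ->
  G_isomorphic om (fun x y => ad h (om x y)).
Proof.
move=> hm [b hb].
set Rb := fun x y => gmul h (om x y).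
set R2 := fun x y => ad h (om x y).
have hbK : inK Rb b by [].
pose T v := Tr Rb v b.
have hT : forall v, inV v -> inK Rb (T v) /\ Pv v b (T v).
  move=> v hv; exact: Tr_spec (inV_good hv) (inV_inj hv) hbK.
exists (fun x => (fun u => gmul (gmul (b u) (x.1 u)) (ginv (T x.2 u)), x.2)).
split.
- move=> [a v] [ha hv]; split => //=.
  by apply: kcomb => //; case: (hT v hv).
- move=> [a v] [a' v'] [ha hv] _ [e1 e2] /=; subst v'.
  congr pair; apply: functional_extensionality => u.
  have := congr1 (fun f => f u) e1 => /= /gmul_cancelr /gmul_cancel //.
- move=> [c v] [hc hv].
  exists ((fun u => gmul (gmul (ginv (b u)) (c u)) (T v u)), v).
    split => //=; apply: ksurj => //; by case: (hT v hv).
  congr pair; apply: functional_extensionality => u /=.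
  by rewrite !gmulA gmulgV gmul1 -gmulA gmulgV gmulg1.
move=> [a v] [a' v'] [ha hv] [ha' hv'].
move: ha hv ha' hv' => /= ha hv ha' hv'.
rewrite /Gmul /=; congr pair.
have [hTv hPv] := hT v hv.
have [hTv' hPv'] := hT v' hv'.
have gvv : Good (v \o v') by apply: good_comp; apply: inV_good.
have ivv : injective (v \o v') by apply: inj_comp; apply: inV_inj.
have [hTvv hPvv] := Tr_spec gvv ivv hbK.
have [hTr1 hPr1] := Tr_spec (inV_good hv) (inV_inj hv) hTv'.
have hcomp : T (v \o v') = Tr Rb v (T v').
  have [N hN] := inV_good hv; have [N' hN'] := inV_good hv'.
  apply: (K_agree (N := N + N') hTvv hTr1) => w hw.
  have [w' [h1 p1]] := hN w ltac:(lia).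
  have [w'' [h2 p2]] := hN' w' ltac:(lia).
  rewrite (hPr1 _ _ p1) (hPv' _ _ p2); apply: hPvv => x /=; by rewrite p2 p1.
set d := fun u => gmul (gmul (b u) (a' u)) (ginv (T v' u)).
have hd : inK R2 d by apply: kcomb.
have [hTa hPa] := Tr_spec (inV_good hv) (inV_inj hv) ha'.
rewrite (pi_Tr hv ha') (pi_Tr hv hd).
set e := fun u => gmul (gmul (T v u) (Tr om v a' u)) (ginv (T (v \o v') u)).
have -> : Tr R2 v d = e.
  symmetry; apply: Tr_unique => //; first exact: inV_good.
  - exact: inV_inj.
  - by apply: kcomb.
  move=> w w' hp; rewrite /e /d hcomp (hPv _ _ hp) (hPa _ _ hp) (hPr1 _ _ hp) //.
apply: functional_extensionality => u.
by rewrite /kmul /e !gmulA gmulVK.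
Qed.
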